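(* A finite, simple, connected graph $G$ is randomly weak total $3$-dimensional if and only if $G$ is a cycle of odd order.
   Context: $d(x,y)$ is the shortest-path distance. A set $W\subseteq V(G)$ is a resolving set if for every two distinct vertices $y,z$ there is $x\in W$ with $d(y,x)\ne d(z,x)$. A set $W$ is a weak total resolving set (WTR-set) if $W$ is resolving and, for every $w\in W$ and every $x\in V(G)\setminus W$, there is $w'\in W\setminus\{w\}$ with $d(x,w')\ne d(w,w')$. $\dim_{wt}(G)$ is the minimum cardinality of a WTR-set. The weak total resolving number $res_{wt}(G)$ is the minimum positive integer $r$ such that every set of $r$ vertices of $G$ is a WTR-set. $G$ is randomly weak total $k$-dimensional if $\dim_{wt}(G)=res_{wt}(G)=k$. *)

(* Defs.v *)
(* A finite simple graph is a symmetric irreflexive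
   relation e on a finType T. *)
From mathcomp Require Import all_boot.
Set Implicit Arguments. Unset Strict Implicit. Unset Printing Implicit Defensive.

Section Graph.
Variables (T : finType) (e : rel T).

Definition walkb (n : nat) (x y : T) : bool :=
  [exists p : n.-tuple T, path e x p && (last x p == y)].

(* shortest-path distance: least n with a walk of length n from x to y
   (for connected graphs a shortest walk has fewer than #|T| edges;
   unreachable pairs get the junk value #|T|) *)
Definition dist (x y : T) : nat := find (fun n => walkb n x y) (iota 0 #|T|).

Definition resolving (W : {set T}) : Prop :=
  forall y z : T, y != z -> exists2 x, x \in W & dist y x != dist z x.

Definition wtr_set (W : {set T}) : Prop :=
  resolving W /\
  forall w x, w \in W -> x \notin W ->
    exists2 w', w' \in W :\ w & dist x w' != dist w w'.

Definition is_dim_wt (k : nat) : Prop :=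
  (exists2 W : {set T}, wtr_set W & #|W| = k) /\
  forall W : {set T}, wtr_set W -> k <= #|W|.

Definition all_sets_wtr (r : nat) : Prop :=
  forall W : {set T}, #|W| = r -> wtr_set W.

Definition is_res_wt (r : nat) : Prop :=
  0 < r /\ all_sets_wtr r /\ forall r', 0 < r' -> all_sets_wtr r' -> r <= r'.

Definition randomly_wt (k : nat) : Prop := is_dim_wt k /\ is_res_wt k.

Definition is_cycle_graph : Prop :=
  3 <= #|T| /\
  exists f : 'I_#|T| -> T, bijective f /\
    forall i j : 'I_#|T|,
      e (f i) (f j) = ((i.+1 %% #|T| == j) || (j.+1 %% #|T| == i)).

End Graph.

(* Main.v *)
Require Import Defs.
From mathcomp Require Import all_boot.
From mathcomp Require Import zify.
Set Implicit Arguments. Unset Strict Implicit. Unset Printing Implicit Defensive.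


Section Basics.
Variables (T : finType) (e : rel T).
Hypothesis esym : symmetric e.
Hypothesis eirr : irreflexive e.
Hypothesis econn : forall x y : T, connect e x y.

Lemma walkbP n x y :
  reflect (exists p : seq T, [/\ size p = n, path e x p & last x p = y])
          (walkb e n x y).
Proof.
apply: (iffP existsP).
  by case=> p /andP[Hp /eqP Hl]; exists (val p); rewrite size_tuple.
case=> p [Hs Hp Hl].
have Hs' : size p == n by apply/eqP.
by exists (Tuple Hs'); rewrite /= Hp Hl eqxx.
Qed.

Lemma walk0 x : walkb e 0 x x.
Proof. by apply/walkbP; exists [::]. Qed.

Lemma walk0E x y : walkb e 0 x y -> x = y.
Proof. by case/walkbP=> p [Hs _ Hl]; case: p Hs Hl. Qed.

Lemma walk_cons n x z y : e x z -> walkb e n z y -> walkb e n.+1 x y.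
Proof.
move=> Hxz /walkbP [p [Hs Hp Hl]]; apply/walkbP; exists (z :: p).
by rewrite /= Hxz Hp Hs Hl.
Qed.

Lemma walk_uncons n x y : walkb e n.+1 x y -> exists2 z, e x z & walkb e n z y.
Proof.
case/walkbP=> p [Hs Hp Hl]; case: p Hs Hp Hl => [//|z p] /= [Hs] /andP[Hxz Hp] Hl.
by exists z => //; apply/walkbP; exists p.
Qed.

Lemma walk_cat m n x y z : walkb e m x y -> walkb e n y z -> walkb e (m + n) x z.
Proof.
elim: m x => [|m IH] x.
  by move/walk0E ->.
by case/walk_uncons=> w Hxw Hw Hy; rewrite addSn; apply: walk_cons Hxw (IH _ Hw Hy).
Qed.

Lemma walk1 x y : e x y -> walkb e 1 x y.
Proof. by move=> H; apply: walk_cons H (walk0 _). Qed.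

Lemma walk_rev n x y : walkb e n x y -> walkb e n y x.
Proof.
elim: n x => [|n IH] x.
  by move/walk0E ->; apply: walk0.
case/walk_uncons=> z Hxz /IH Hw; rewrite -addn1; apply: walk_cat Hw _.
by apply: walk1; rewrite esym.
Qed.

Lemma walk_short x y : exists2 n, n < #|T| & walkb e n x y.
Proof.
case/connectP: (econn x y) => p Hp ->.
case: (shortenP Hp) => p' Hp' Hu _.
exists (size p'); last by apply/walkbP; exists p'.
have := max_card (pred_of_seq (x :: p')).
by move/card_uniqP: Hu => ->.
Qed.

Lemma has_walk x y : has (fun n => walkb e n x y) (iota 0 #|T|).
Proof.
case: (walk_short x y) => n Hn Hw; apply/hasP; exists n => //.
by rewrite mem_iota.
Qed.

Lemma dist_lt x y : dist e x y < #|T|.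
Proof. by have := has_walk x y; rewrite has_find size_iota. Qed.

Lemma dist_walk x y : walkb e (dist e x y) x y.
Proof.
have := nth_find 0 (has_walk x y); rewrite nth_iota ?add0n //.
exact: dist_lt.
Qed.

Lemma dist_min m x y : walkb e m x y -> dist e x y <= m.
Proof.
move=> Hw; rewrite leqNgt; apply/negP => Hlt.
have := before_find 0 Hlt; rewrite nth_iota ?add0n ?Hw //.
exact: ltn_trans Hlt (dist_lt x y).
Qed.

Lemma dist0 x : dist e x x = 0.
Proof. by apply/eqP; rewrite -leqn0; apply: dist_min; apply: walk0. Qed.

Lemma dist_eq0 x y : dist e x y = 0 -> x = y.
Proof. by move=> H; have := dist_walk x y; rewrite H; apply: walk0E. Qed.

Lemma dist_sym x y : dist e x y = dist e y x.
Proof.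
by apply/eqP; rewrite eqn_leq !dist_min // walk_rev // dist_walk.
Qed.

Lemma dist_tri x y z : dist e x z <= dist e x y + dist e y z.
Proof. by apply: dist_min; apply: walk_cat; apply: dist_walk. Qed.

Lemma dist_adj x z y : e x z -> dist e x y <= (dist e z y).+1.
Proof. by move=> H; apply: dist_min; apply: walk_cons H (dist_walk _ _). Qed.

Lemma dist_geo k x y : dist e x y = k.+1 -> exists2 z, e x z & dist e z y = k.
Proof.
move=> H; have := dist_walk x y; rewrite H => /walk_uncons [z Hxz Hw].
exists z => //; apply/eqP; rewrite eqn_leq dist_min //=.
by have := dist_adj y Hxz; rewrite H.
Qed.

Lemma dist1 x y : e x y -> dist e x y = 1.
Proof.
move=> H; apply/eqP; rewrite eqn_leq dist_min ?walk1 //=.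
rewrite lt0n; apply/eqP => /dist_eq0 E; by rewrite E eirr in H.
Qed.

End Basics.


Definition cd (n i j : nat) := minn ((i - j) + (j - i)) (n - ((i - j) + (j - i))).

Lemma modS_cases a n : a < n -> a.+1 %% n = if a.+1 == n then 0 else a.+1.
Proof.
move=> Ha; case: eqP => [->|Hne]; first exact: modnn.
by rewrite modn_small //; rewrite ltn_neqAle Ha andbT; apply/eqP.
Qed.

Section Cycle.
Variables (T : finType) (e : rel T).
Hypothesis esym : symmetric e.
Hypothesis eirr : irreflexive e.
Hypothesis econn : forall x y : T, connect e x y.
Variable f : 'I_#|T| -> T.
Hypothesis fbij : bijective f.
Hypothesis Hf : forall i j : 'I_#|T|,
      e (f i) (f j) = ((i.+1 %% #|T| == j) || (j.+1 %% #|T| == i)).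
Hypothesis n3 : 3 <= #|T|.

Let npos : 0 < #|T|. Proof. by apply: leq_trans n3. Qed.
Definition om (m : nat) : 'I_#|T| := Ordinal (ltn_pmod m npos).

Lemma om_ord (i : 'I_#|T|) : om i = i.
Proof. by apply: val_inj; rewrite /= modn_small. Qed.

Lemma walk_fwd k i : walkb e k (f (om i)) (f (om (i + k))).
Proof.
elim: k => [|k IH]; first by rewrite addn0; apply: walk0.
rewrite -addn1 addnA; apply: (walk_cat IH); apply: walk1.
by rewrite Hf /= -addn1 modnDml eqxx.
Qed.

Lemma cd_ub (i j : 'I_#|T|) : dist e (f i) (f j) <= cd #|T| i j.
Proof.
wlog Hij : i j / i <= j.
  move=> W; case: (leqP i j) => H; first exact: W.
  rewrite dist_sym //; apply: leq_trans (W j i (ltnW H)) _; rewrite /cd; lia.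
have H1 : dist e (f i) (f j) <= j - i.
  have := walk_fwd (j - i) i; rewrite om_ord subnKC // om_ord.
  exact: dist_min.
have H2 : dist e (f i) (f j) <= #|T| - (j - i).
  rewrite dist_sym //; have := walk_fwd (#|T| - (j - i)) j; rewrite om_ord.
  have -> : om (j + (#|T| - (j - i))) = i.
    apply: val_inj => /=.
    have -> : j + (#|T| - (j - i)) = i + #|T| by have := ltn_ord j; lia.
    by rewrite modnDr modn_small.
  exact: dist_min.
rewrite /cd; lia.
Qed.

Lemma finj : injective f.
Proof. exact: bij_inj. Qed.

Lemma cd_lb m (i j : 'I_#|T|) : walkb e m (f i) (f j) -> cd #|T| i j <= m.
Proof.
elim: m i => [|m IH] i.
  by move/walk0E/finj ->; rewrite /cd; lia.
case/walk_uncons=> z Hz Hw.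
case: fbij => g fg gf.
rewrite -[z]gf in Hz Hw; move: (IH _ Hw) Hz; set k := g z => Hk.
rewrite Hf => /orP[] /eqP.
  rewrite modS_cases //; have := ltn_ord i; have := ltn_ord k; have := ltn_ord j.
  case: eqP => Hn; rewrite /cd in Hk *; lia.
rewrite modS_cases //; have := ltn_ord i; have := ltn_ord k; have := ltn_ord j.
case: eqP => Hn; rewrite /cd in Hk *; lia.
Qed.

Lemma cycle_dist (i j : 'I_#|T|) : dist e (f i) (f j) = cd #|T| i j.
Proof.
by apply/eqP; rewrite eqn_leq cd_ub // cd_lb // dist_walk.
Qed.

End Cycle.


Lemma cd_eq_cases n y z b : y < n -> z < n -> b < n -> y != z ->
  cd n y b = cd n z b -> y + z = 2 * b \/ y + z + n = 2 * b \/ y + z = 2 * b + n.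
Proof.
move=> Hy Hz Hb /eqP Hyz; rewrite /cd => H.
case: (leqP y b) => H1; case: (leqP z b) => H2.
- have E1 : (y - b) + (b - y) = b - y by lia.
  have E2 : (z - b) + (b - z) = b - z by lia.
  rewrite E1 E2 in H; move: H; rewrite /minn; case: ifP; case: ifP; lia.
- have E1 : (y - b) + (b - y) = b - y by lia.
  have E2 : (z - b) + (b - z) = z - b by lia.
  rewrite E1 E2 in H; move: H; rewrite /minn; case: ifP; case: ifP; lia.
- have E1 : (y - b) + (b - y) = y - b by lia.
  have E2 : (z - b) + (b - z) = b - z by lia.
  rewrite E1 E2 in H; move: H; rewrite /minn; case: ifP; case: ifP; lia.
- have E1 : (y - b) + (b - y) = y - b by lia.
  have E2 : (z - b) + (b - z) = z - b by lia.
  rewrite E1 E2 in H; move: H; rewrite /minn; case: ifP; case: ifP; lia.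
Qed.

Lemma cd_res n y z b c : odd n -> y < n -> z < n -> b < n -> c < n -> y != z ->
  b != c -> cd n y b = cd n z b -> cd n y c = cd n z c -> False.
Proof.
move=> Hodd Hy Hz Hb Hc Hyz /eqP Hbc H1 H2.
have Hn : n = 2 * n./2 + 1 by rewrite -[in LHS](odd_double_half n) Hodd mul2n addnC.
have := cd_eq_cases Hy Hz Hb Hyz H1; have := cd_eq_cases Hy Hz Hc Hyz H2.
move: Hn; set k := n./2 => Hn.
lia.
Qed.

Lemma cd_refl n a b : odd n -> a < n -> b < n -> a != b ->
  exists x, [/\ x < n, x != a, x != b & cd n x b = cd n a b].
Proof.
move=> Hodd Ha Hb /eqP Hab.
have Hn : n = 2 * n./2 + 1 by rewrite -[in LHS](odd_double_half n) Hodd mul2n addnC.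
move: Hn; set k := n./2 => Hn.
case: (leqP a b) => Hle.
  case: (ltnP (2 * b - a) n) => H.
    exists (2 * b - a); split; try apply/eqP; rewrite /cd; lia.
  exists (2 * b - a - n); split; try apply/eqP; rewrite /cd; lia.
case: (leqP (a - b) b) => H.
  exists (2 * b - a); split; try apply/eqP; rewrite /cd; lia.
exists (2 * b + n - a); split; try apply/eqP; rewrite /cd; lia.
Qed.


Section Rev.
Variables (T : finType) (e : rel T).
Hypothesis esym : symmetric e.
Hypothesis eirr : irreflexive e.
Hypothesis econn : forall x y : T, connect e x y.
Variable f : 'I_#|T| -> T.
Hypothesis fbij : bijective f.
Hypothesis Hf : forall i j : 'I_#|T|,
      e (f i) (f j) = ((i.+1 %% #|T| == j) || (j.+1 %% #|T| == i)).
Hypothesis n3 : 3 <= #|T|.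
Hypothesis nodd : odd #|T|.

Let cdist := cycle_dist esym econn fbij Hf n3.

Lemma res2 b c y z : b != c -> y != z ->
  (dist e y b != dist e z b) || (dist e y c != dist e z c).
Proof.
move=> Hbc Hyz; case: fbij => g gf fg; rewrite -(fg b) -(fg c) -(fg y) -(fg z) !cdist.
rewrite -negb_and; apply/negP => /andP [/eqP H1 /eqP H2].
apply: (cd_res nodd _ _ _ _ _ _ H1 H2) => //.
- by apply/negP => /eqP/val_inj E; move: Hyz; rewrite -(fg y) -(fg z) E eqxx.
- by apply/negP => /eqP/val_inj E; move: Hbc; rewrite -(fg b) -(fg c) E eqxx.
Qed.

Lemma refl2 a b : a != b -> exists x, [/\ x != a, x != b & dist e x b = dist e a b].
Proof.
move=> Hab; case: fbij => g gf fg.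
have Hab' : g a != g b by apply/negP => /eqP E; move: Hab; rewrite -(fg a) -(fg b) E eqxx.
have [x [Hx Hxa Hxb Hd]] := cd_refl nodd (ltn_ord (g a)) (ltn_ord (g b)) Hab'.
exists (f (Ordinal Hx)); split.
- by apply/negP => /eqP E; move: Hxa; rewrite -E /= gf eqxx.
- by apply/negP => /eqP E; move: Hxb; rewrite -E /= gf eqxx.
- by rewrite -[in RHS](fg a) -(fg b) !cdist.
Qed.

End Rev.


Lemma card3s (T : finType) (x y z : T) : x != y -> y != z -> z != x ->
  #|(x |: (y |: [set z]))| = 3.
Proof.
move=> Hxy Hyz Hzx.
by rewrite !cardsU1 cards1 !in_setU1 !in_set1 (negbTE Hxy) eq_sym (negbTE Hzx) (negbTE Hyz).
Qed.

Lemma card2s (T : finType) (x y : T) : x != y -> #|(x |: [set y])| = 2.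
Proof. by move=> Hxy; rewrite cardsU1 cards1 in_set1 Hxy. Qed.

Section Gen.
Variables (T : finType) (e : rel T).
Hypothesis H2 : forall b c y z : T, b != c -> y != z ->
  (dist e y b != dist e z b) || (dist e y c != dist e z c).
Hypothesis HR : forall a b : T, a != b ->
  exists x, [/\ x != a, x != b & dist e x b = dist e a b].
Hypothesis n3 : 3 <= #|T|.

Lemma wtr_big (W : {set T}) : 3 <= #|W| -> wtr_set e W.
Proof.
move=> HW; split.
  move=> y z Hyz.
  have /card_gt1P [b [c [Hb Hc Hbc]]] : 1 < #|W| by apply: leq_trans HW.
  by case/orP: (H2 Hbc Hyz) => H; [exists b | exists c].
move=> w x Hw Hx.
have : 1 < #|W :\ w| by move: HW; rewrite (cardsD1 w W) Hw.
case/card_gt1P => [b [c [Hb Hc Hbc]]].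
have Hxw : x != w by apply/negP => /eqP E; rewrite E Hw in Hx.
by case/orP: (H2 Hbc Hxw) => H; [exists b | exists c].
Qed.

Lemma wtr_ge3 (W : {set T}) : wtr_set e W -> 3 <= #|W|.
Proof.
case=> Hres Hwt; rewrite leqNgt; apply/negP => Hlt.
have [x [y [z [[_ _ _] [Hxy Hyz Hzx]]]]] := card_gt2P n3.
have : #|W| = 0 \/ #|W| = 1 \/ #|W| = 2 by lia.
case=> [/cards0_eq E | [/eqP/cards1P [a E] | HW2]].
- by case: (Hres x y Hxy) => u; rewrite E in_set0.
- have [v Hv] : exists v, v != a.
    by case: (eqVneq x a) => [Ex|]; [exists y; rewrite -Ex eq_sym | exists x].
  have [] := Hwt a v; rewrite ?E ?in_set1 ?eqxx ?(negbTE Hv) //.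
  by move=> w'; rewrite setDv in_set0.
- have : 1 < #|W| by rewrite HW2.
  case/card_gt1P => [a [b [Ha Hb Hab]]].
  have HWa : #|W :\ a| == 1 by move: HW2; rewrite (cardsD1 a W) Ha add1n => -[->].
  case/cards1P: HWa => u Hu.
  have Hbu : b = u by apply/set1P; rewrite -Hu in_setD1 eq_sym Hab.
  have [x' [Hx'a Hx'b Hd]] := HR Hab.
  have Hx' : x' \notin W.
    apply/negP => Hin; have : x' \in W :\ a by rewrite in_setD1 Hx'a.
    by rewrite Hu in_set1 -Hbu (negbTE Hx'b).
  case: (Hwt a x' Ha Hx') => w'; rewrite Hu in_set1 => /eqP ->.
  by rewrite -Hbu Hd eqxx.
Qed.

Lemma gen_randomly : randomly_wt e 3.
Proof.
have [x [y [z [[_ _ _] [Hxy Hyz Hzx]]]]] := card_gt2P n3.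
split; split.
- by exists (x |: (y |: [set z])); [apply: wtr_big; rewrite card3s | rewrite card3s].
- exact: wtr_ge3.
- by [].
split; first by move=> W HW; apply: wtr_big; rewrite HW.
move=> r Hr Hall; rewrite leqNgt; apply/negP => Hlt.
have : r = 1 \/ r = 2 by lia.
case=> Er; subst r.
- by have := wtr_ge3 (Hall [set x] (cards1 x)); rewrite cards1.
- by have := wtr_ge3 (Hall (x |: [set y]) (card2s Hxy)); rewrite card2s.
Qed.

End Gen.


Section Fwd.
Variables (T : finType) (e : rel T).
Hypothesis esym : symmetric e.
Hypothesis eirr : irreflexive e.
Hypothesis econn : forall x y : T, connect e x y.
Hypothesis Hall3 : all_sets_wtr e 3.
Hypothesis Hge3 : forall W : {set T}, wtr_set e W -> 3 <= #|W|.
Hypothesis n3 : 3 <= #|T|.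

Let dtri := dist_tri econn.
Let dsym := dist_sym esym econn.
Let d1 := dist1 eirr econn.
Let deq0 := dist_eq0 econn.
Let dadj := dist_adj econn.
Let dgeo := dist_geo econn.
Let d0 := dist0 econn.

Lemma neq_adj x y : e x y -> x != y.
Proof. by apply: contraTneq => ->; rewrite eirr. Qed.

Lemma L3 a x b c : a != x -> a != b -> a != c -> x != b -> x != c -> b != c ->
  (dist e x b != dist e a b) || (dist e x c != dist e a c).
Proof.
move=> Hax Hab Hac Hxb Hxc Hbc.
set W := a |: (b |: [set c]).
have HW : wtr_set e W by apply: Hall3; rewrite card3s // eq_sym.
have HaW : a \in W by rewrite !in_setU1 eqxx.
have HxW : x \notin W by rewrite !in_setU1 in_set1 !negb_or eq_sym Hax Hxb.
case: HW => _ /(_ a x HaW HxW) [w'].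
rewrite in_setD1 !in_setU1 in_set1 => /andP[Hna /orP[/eqP E|/orP[/eqP E|/eqP E]]].
- by rewrite E eqxx in Hna.
- by rewrite E => ->.
- by rewrite E => ->; rewrite orbT.
Qed.

Lemma deg2 v a b c : e v a -> e v b -> e v c -> a != b -> b != c -> a != c -> False.
Proof.
move=> Ha Hb Hc Hab Hbc Hac.
have Hva := neq_adj Ha; have Hvb := neq_adj Hb; have Hvc := neq_adj Hc.
have d2 : forall x y, e v x -> e v y -> x != y -> 1 <= dist e x y <= 2.
  move=> x y Hx Hy Hxy; apply/andP; split.
    by rewrite lt0n; apply: contra Hxy => /eqP/deq0 ->.
  apply: leq_trans (dtri x v y) _.
  by rewrite dsym !d1 // esym.
have vv : forall x y, e v x -> e v y -> dist e y v = dist e x v.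
  by move=> x y Hx Hy; rewrite !(dsym _ v) !d1.
have Hav : a != v by rewrite eq_sym.
have Hbv : b != v by rewrite eq_sym.
have Hcv : c != v by rewrite eq_sym.
have Hcb : c != b by rewrite eq_sym.
have Hba : b != a by rewrite eq_sym.
have Hca : c != a by rewrite eq_sym.
have := L3 Hab Hav Hac Hbv Hbc Hvc; rewrite (vv _ _ Ha Hb) eqxx /= => /eqP H1.
have := L3 Hac Hav Hab Hcv Hcb Hvb; rewrite (vv _ _ Ha Hc) eqxx /= => /eqP H2.
have := L3 Hbc Hbv Hba Hcv Hca Hva; rewrite (vv _ _ Hb Hc) eqxx /= => /eqP H3.
have := d2 _ _ Ha Hb Hab; have := d2 _ _ Ha Hc Hac; have := d2 _ _ Hb Hc Hbc.
move=> A B C.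
rewrite (dsym c b) in H2; rewrite (dsym c a) (dsym b a) in H3.
move: H1 H2 H3 A B C.
move: (dist e b c) (dist e a c) (dist e a b) => p q r.
clear; lia.
Qed.

Lemma leaf_inj v u : e v u -> (forall z, e v z -> z = u) ->
  forall x x', dist e v x = dist e v x' -> x = x'.
Proof.
move=> Hvu Hleaf x x' E.
suff : forall k x x', dist e v x = k -> dist e v x' = k -> x = x'.
  by move/(_ _ x x' E erefl).
elim=> [|k IH] {x x' E} x x' Ex Ex'.
  by rewrite -(deq0 Ex) -(deq0 Ex').
rewrite dsym in Ex; rewrite dsym in Ex'.
case: (dgeo Ex) => p Hxp Ep.
case: (dgeo Ex') => p' Hxp' Ep'.
have Epp : p = p' by apply: IH; rewrite dsym.
subst p'.
case: k IH Ep Ep' Ex Ex' => [|k] IH Ep Ep' Ex Ex'.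
  have Hpv := deq0 Ep; subst p.
  have Hx : e v x by rewrite esym.
  have Hx' : e v x' by rewrite esym.
  by rewrite (Hleaf x Hx) (Hleaf x' Hx').
case: (dgeo Ep) => q Hpq Eq.
case: (eqVneq x x') => // Hne; exfalso.
have Hqx : q != x by apply/negP => /eqP E; rewrite -E Eq in Ex; move: Ex; clear; lia.
have Hqx' : q != x' by apply/negP => /eqP E; rewrite -E Eq in Ex'; move: Ex'; clear; lia.
by apply: (deg2 Hpq _ _ Hqx Hne Hqx'); rewrite esym.
Qed.

Lemma no_leaf v u : e v u -> (forall z, e v z -> z = u) -> False.
Proof.
move=> Hvu Hleaf.
have injv := leaf_inj Hvu Hleaf.
case: (@arg_maxnP T v xpredT (dist e v) isT) => y _ Hmax.
have Hyv : y != v.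
  apply/negP => /eqP Eyv.
  have := Hmax u isT; rewrite /= Eyv d0 leqn0 => /eqP /deq0 E.
  by rewrite -E eirr in Hvu.
have [D ED] : exists D, dist e v y = D.+1.
  case E: (dist e v y) => [|D]; last by exists D.
  by move/deq0: E => E; rewrite E eqxx in Hyv.
have := ED; rewrite dsym => /dgeo [p Hyp Ep].
have Hleafy : forall z, e y z -> z = p.
  move=> z Hyz; apply: (injv).
  have h1 := Hmax z isT; rewrite /= in h1; have h2 := dadj v Hyz.
  rewrite dsym in h2; rewrite (dsym z v) in h2.
  have h3 : dist e v z != dist e v y.
    apply/negP => /eqP E; have E2 := injv _ _ E; by rewrite E2 eirr in Hyz.
  rewrite (dsym v p) Ep; move: h1 h2 h3; rewrite ED (dsym v z).
  move: (dist e z v) => m; clear; lia.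
have injy := leaf_inj Hyp Hleafy.
have : 3 <= #|v |: [set y]|.
  apply: Hge3; split.
    move=> y1 z1 H; exists v; first by rewrite in_setU1 eqxx.
    by apply/negP => /eqP E; rewrite !(dsym _ v) in E; rewrite (injv _ _ E) eqxx in H.
  move=> w x; rewrite !in_setU1 !in_set1 negb_or => /orP[] /eqP -> /andP[Hxv Hxy].
    exists y; first by rewrite in_setD1 in_setU1 in_set1 eqxx orbT andbT.
    by apply/negP => /eqP E; rewrite !(dsym _ y) in E; rewrite (injy _ _ E) eqxx in Hxv.
  exists v; first by rewrite in_setD1 in_setU1 eqxx andbT eq_sym.
  by apply/negP => /eqP E; rewrite !(dsym _ v) in E; rewrite (injv _ _ E) eqxx in Hxy.
by rewrite card2s // eq_sym.
Qed.

End Fwd.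


Section Build.
Variables (T : finType) (e : rel T).
Hypothesis esym : symmetric e.
Hypothesis eirr : irreflexive e.
Hypothesis econn : forall x y : T, connect e x y.
Hypothesis Hdeg : forall v a b c, e v a -> e v b -> e v c -> a != b -> b != c -> a != c -> False.
Hypothesis Hnoleaf : forall v u, e v u -> (forall z, e v z -> z = u) -> False.
Variables v0 v1 : T.
Hypothesis Hv01 : e v0 v1.

Definition other u w := odflt u [pick z | e u z && (z != w)].

Lemma other_spec u w : e u w -> e u (other u w) /\ other u w != w.
Proof.
move=> Huw; rewrite /other; case: pickP => [z /andP[H1 H2] //|H].
exfalso; apply: (Hnoleaf Huw) => z Hz.
by have := H z; rewrite Hz /= => /negbFE/eqP.
Qed.

Lemma other_uniq u w z : e u w -> e u z -> z != w -> z = other u w.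
Proof.
move=> Huw Huz Hzw; case: (other_spec Huw) => Ho Hnw.
case: (eqVneq z (other u w)) => // Hne; exfalso.
by apply: (Hdeg Huw Huz Ho _ Hne); rewrite eq_sym.
Qed.

Definition F (p : T * T) := (p.2, other p.2 p.1).
Definition st k := iter k F (v0, v1).
Definition s k := (st k).1.

Lemma st2 k : (st k).2 = s k.+1.
Proof. by []. Qed.

Lemma sSS k : s k.+2 = other (s k.+1) (s k).
Proof. by []. Qed.

Lemma s_adj k : e (s k) (s k.+1).
Proof.
elim: k => [//|k IH].
rewrite sSS; case: (other_spec (u := s k.+1) (w := s k) _) => //.
by rewrite esym.
Qed.

Lemma s_ne2 k : s k.+2 != s k.
Proof.
rewrite sSS; case: (other_spec (u := s k.+1) (w := s k) _) => //.
by rewrite esym s_adj.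
Qed.

Lemma s_nbr k z : e (s k.+1) z -> z = s k \/ z = s k.+2.
Proof.
move=> Hz; case: (eqVneq z (s k)) => [->|Hne]; first by left.
by right; rewrite sSS; apply: other_uniq => //; rewrite esym s_adj.
Qed.

Definition P j := [exists k : 'I_j, s k == s j].

Lemma exP : exists j, P j.
Proof.
case: (boolP [exists j : 'I_#|T|.+1, P j]) => [/existsP [j Hj]|H].
  by exists j.
exfalso.
have Hinj : injective (fun i : 'I_#|T|.+1 => s i).
  move=> a b Hab; apply/eqP; apply/negP => Hne.
  move/existsPn: H => H.
  case: (ltngtP a b) => Hlt.
  - have := H b; rewrite /P => /existsPn /(_ (Ordinal Hlt)) /=.
    by rewrite Hab eqxx.
  - have := H a; rewrite /P => /existsPn /(_ (Ordinal Hlt)) /=.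
    by rewrite Hab eqxx.
  - by move/val_inj: Hlt Hne => ->; rewrite eqxx.
by have := @leq_card _ _ _ Hinj; rewrite card_ord ltnn.
Qed.

Definition p := ex_minn exP.

Lemma p_spec : (exists2 i, i < p & s i = s p) /\ (forall j, P j -> p <= j).
Proof.
rewrite /p; case: ex_minnP => m /existsP [k /eqP Hk] Hmin.
by split => //; exists k.
Qed.

Lemma s_inj a b : a < p -> b < p -> s a = s b -> a = b.
Proof.
move=> Ha Hb Hab; case: p_spec => _ Hmin.
case: (ltngtP a b) => // Hlt; exfalso.
- have : P b by apply/existsP; exists (Ordinal Hlt); rewrite /= Hab.
  by move/Hmin; rewrite leqNgt Hb.
- have : P a by apply/existsP; exists (Ordinal Hlt); rewrite /= Hab.
  by move/Hmin; rewrite leqNgt Ha.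
Qed.

Lemma sp0 : s p = s 0.
Proof.
case: p_spec => [[i Hi Hs] Hmin].
case: i Hi Hs => [//|i'] Hi Hs.
exfalso.
case Ep: p Hi Hs => [//|p'] Hi Hs.
have Hadj : e (s i'.+1) (s p') by rewrite Hs esym; apply: s_adj.
case: (s_nbr Hadj) => E.
- have : P p' by apply/existsP; exists (Ordinal (Hi : i' < p')); rewrite /= E.
  by move/Hmin; rewrite Ep ltnn.
- case: (ltngtP i'.+2 p') => Hc.
  + have : P p' by apply/existsP; exists (Ordinal Hc); rewrite /= E.
    by move/Hmin; rewrite Ep ltnn.
  + have Hp' : p' = i'.+1 by lia.
    by subst p'; have := s_adj i'.+1; rewrite Hs eirr.
  + by subst p'; move: Hs => /eqP; rewrite eq_sym (negbTE (s_ne2 _)).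
Qed.

Lemma p_ge3 : 3 <= p.
Proof.
have := sp0; case: p_spec => [[i Hi _] _].
case Ep: p Hi => [|[|[|p']]] // _ H.
- by have := s_adj 0; rewrite H eirr.
- by have := s_ne2 0; rewrite H eqxx.
Qed.

Lemma st_p : st p = st 0.
Proof.
have H3 := p_ge3.
rewrite [st p]surjective_pairing st2.
have -> : (st p).1 = v0 by rewrite -/(s p) sp0.
case Ep: p H3 => [//|p'] H3.
rewrite sSS -/(s p'.+1) -Ep sp0 /=.
congr (_, _); symmetry; apply: other_uniq => //.
  by have := s_adj p'; rewrite -Ep sp0 esym.
apply/negP => /eqP E.
have := s_inj (a := 1) (b := p'); rewrite Ep -E => /(_ _ _ erefl).
move=> H; have := H (leq_trans _ H3) (leqnn _); lia.
Qed.

Lemma s_period k : s (k + p) = s k.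
Proof. by rewrite /s /st iterD -/(st p) st_p. Qed.

Lemma s_mod m : s m = s (m %% p).
Proof.
rewrite {1}(divn_eq m p); elim: (m %/ p) => [|q IH]; first by rewrite mul0n add0n.
by rewrite mulSn -addnA addnC s_period.
Qed.

Lemma p_pos : 0 < p.
Proof. by apply: leq_trans p_ge3. Qed.

Lemma reach m x y : (exists k, s k = x) -> walkb e m x y -> exists k, s k = y.
Proof.
elim: m x => [|m IH] x [k Hk].
  by move/walk0E => <-; exists k.
case/walk_uncons => z Hxz Hw; apply: (IH z) => //.
have : e (s (k + p).-1.+1) z.
  by rewrite prednK ?s_period ?Hk //; have := p_pos; lia.
by case/s_nbr => ->; [exists (k + p).-1 | exists (k + p).-1.+2].
Qed.

Lemma s_surj y : exists2 k, k < p & s k = y.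
Proof.
have H0 : exists k, s k = v0 by exists 0.
have [k Hk] := reach H0 (dist_walk econn v0 y).
by exists (k %% p); [apply: ltn_pmod p_pos | rewrite -s_mod].
Qed.

Lemma p_card : p = #|T|.
Proof.
apply/eqP; rewrite eqn_leq; apply/andP; split.
  have Hinj : injective (fun i : 'I_p => s i).
    by move=> a b /s_inj E; apply: val_inj; apply: E.
  by have := @leq_card _ _ _ Hinj; rewrite card_ord.
pose g (y : T) : 'I_p := odflt (Ordinal p_pos) [pick i : 'I_p | s i == y].
have Hg : forall y, s (g y) = y.
  move=> y; rewrite /g; case: pickP => [i /eqP //|H].
  case: (s_surj y) => k Hk Hs; have := H (Ordinal Hk); rewrite /= Hs eqxx //.
have Hinj : injective g by move=> a b E; rewrite -(Hg a) -(Hg b) E.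
by have := @leq_card _ _ _ Hinj; rewrite card_ord.
Qed.

Lemma build_cycle : is_cycle_graph e.
Proof.
have Hp := p_card.
have inj' : forall a b, a < #|T| -> b < #|T| -> s a = s b -> a = b.
  by rewrite -Hp; exact: s_inj.
have smod : forall m, s m = s (m %% #|T|) by rewrite -Hp; exact: s_mod.
have sper : forall m, s (m + #|T|) = s m by rewrite -Hp; exact: s_period.
have surj : forall y, exists2 k, k < #|T| & s k = y by rewrite -Hp; exact: s_surj.
have n3 : 3 <= #|T| by rewrite -Hp; exact: p_ge3.
have npos : 0 < #|T| by lia.
split => //.
exists (fun i : 'I_#|T| => s i); split.
  pose g (y : T) : 'I_#|T| := odflt (Ordinal npos) [pick i : 'I_#|T| | s i == y].
  have Hg : forall y, s (g y) = y.
    move=> y; rewrite /g; case: pickP => [i /eqP //|H].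
    case: (surj y) => k Hk Hs; have := H (Ordinal Hk); rewrite /= Hs eqxx //.
  exists g; last exact: Hg.
  by move=> i; apply: val_inj; apply: inj'; rewrite ?ltn_ord // Hg.
move=> i j; apply/idP/idP.
- move=> Hij.
  have Hi : s (i + #|T|).-1.+1 = s i by rewrite prednK ?sper //; lia.
  rewrite -Hi in Hij; case: (s_nbr Hij) => E.
  + apply/orP; right.
    have Ej : j = (i + #|T|).-1 %% #|T| :> nat.
      by apply: inj' => //; [apply: ltn_pmod | rewrite -smod].
    rewrite Ej -addn1 modnDml addn1 prednK ?modnDr ?modn_small //; lia.
  + apply/orP; left.
    have Ej : j = (i + #|T|).-1.+2 %% #|T| :> nat.
      by apply: inj' => //; [apply: ltn_pmod | rewrite -smod].
    have E2 : (i + #|T|).-1.+2 = i.+1 + #|T| by lia.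
    by rewrite Ej E2 modnDr.
- case/orP => /eqP E.
  + by rewrite -E -smod; exact: s_adj.
  + by rewrite esym -E -smod; exact: s_adj.
Qed.

End Build.



Unset Implicit Arguments.

Theorem corollary5 (T : finType) (e : rel T)
  (esym : symmetric e) (eirr : irreflexive e)
  (econn : forall x y : T, connect e x y) :
  randomly_wt e 3 <-> (is_cycle_graph e /\ odd #|T|).
Proof.
split.
  case=> [[[W HW HW3] Hge3] [_ [Hall3 _]]].
  have n3 : 3 <= #|T| by rewrite -HW3 max_card.
  have [x0 [x1 [_ [[_ _ _] [Hne _ _]]]]] := card_gt2P n3.
  have [v1 Hv1] : exists v1, e x0 v1.
    case Ed: (dist e x0 x1) => [|k].
      by move/(dist_eq0 econn): Ed => E; rewrite E eqxx in Hne.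
    by case: (dist_geo econn Ed) => z Hz _; exists z.
  have Hdeg := deg2 esym eirr econn Hall3.
  have Hnl := no_leaf esym eirr econn Hall3 Hge3.
  have Hcyc := build_cycle esym eirr econn Hdeg Hnl Hv1.
  split => //.
  case: (Hcyc) => _ [f [fbij Hf]].
  have finj : injective f by apply: bij_inj.
  case Hev: (odd #|T|) => //; exfalso.
  have Hn := odd_double_half #|T|; rewrite Hev add0n in Hn.
  set m := #|T|./2 in Hn.
  have {}Hn : #|T| = m * 2 by rewrite -[in LHS]Hn muln2.
  clearbody m.
  have Hm : m < #|T| by lia.
  have H0 : 0 < #|T| by lia.
  have H1 : 1 < #|T| by lia.
  have Hl : #|T|.-1 < #|T| by lia.
  have D : forall a b (Ha : a < #|T|) (Hb : b < #|T|), a <> b ->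
      f (Ordinal Ha) != f (Ordinal Hb).
    move=> a b Ha Hb Hij; apply/negP => /eqP /finj E; by case: E.
  have := L3 Hall3 (D _ _ H1 Hl ltac:(lia)) (D _ _ H1 H0 ltac:(lia))
    (D _ _ H1 Hm ltac:(lia)) (D _ _ Hl H0 ltac:(lia))
    (D _ _ Hl Hm ltac:(lia)) (D _ _ H0 Hm ltac:(lia)).
  rewrite !(cycle_dist esym econn fbij Hf n3) /cd /=.
  case/orP => /negP H; apply: H; apply/eqnP; move: Hn n3; clear; rewrite -!subn1; move: #|T| => n; lia.
case=> Hcyc Hodd; case: (Hcyc) => n3 [f [fbij Hf]].
apply: gen_randomly => //.
- by move=> b c y z; apply: (res2 esym econn fbij Hf n3 Hodd).
- by move=> a b; apply: (refl2 esym econn fbij Hf n3 Hodd).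
Qed.
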